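(* A skew lattice $S$ is a weak distributive solution of the Yang–Baxter equation if and only if it satisfies, for all $x,y,z\in S$, \[ (x\wedge y\wedge x)\vee((x\vee y\vee x)\wedge z\wedge(x\vee y\vee x))\vee(x\wedge y\wedge x) =(x\vee(y\wedge z\wedge y)\vee x)\wedge(y\vee z\vee y)\wedge(x\vee(y\wedge z\wedge y)\vee x). \] In particular, weak distributive solutions form a variety of skew lattices.
   Context: A skew lattice is a set $S$ with two binary operations $\wedge,\vee$, each idempotent and associative, satisfying the absorption laws $x\wedge(x\vee y)=x=x\vee(x\wedge y)$ and $(x\wedge y)\vee y=y=(x\vee y)\wedge y$ for all $x,y\in S$. $S$ is a weak distributive solution if $r_W:S\times S\to S\times S$, $r_W(x,y)=(x\wedge y\wedge x,\,x\vee y\vee x)$, satisfies $(r_W\times\mathrm{id})\circ(\mathrm{id}\times r_W)\circ(r_W\times\mathrm{id})=(\mathrm{id}\times r_W)\circ(r_W\times\mathrm{id})\circ(\mathrm{id}\times r_W)$. *)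

(* Defs.v *)
Set Implicit Arguments.

Definition is_skew_lattice (S : Type) (m j : S -> S -> S) : Prop :=
  (forall x, m x x = x) /\ (forall x, j x x = x) /\
  (forall x y z, m x (m y z) = m (m x y) z) /\
  (forall x y z, j x (j y z) = j (j x y) z) /\
  (forall x y, m x (j x y) = x) /\ (forall x y, j x (m x y) = x) /\
  (forall x y, j (m x y) y = y) /\ (forall x y, m (j x y) y = y).

Definition rW (S : Type) (m j : S -> S -> S) (p : S * S) : S * S :=
  let (x, y) := p in (m x (m y x), j x (j y x)).

Definition r12 (S : Type) (r : S * S -> S * S) (t : S * S * S) : S * S * S :=
  let '(x, y, z) := t in let (a, b) := r (x, y) in (a, b, z).
Definition r23 (S : Type) (r : S * S -> S * S) (t : S * S * S) : S * S * S :=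
  let '(x, y, z) := t in let (b, c) := r (y, z) in (x, b, c).

Definition braid_eq (S : Type) (r : S * S -> S * S) : Prop :=
  forall t : S * S * S, r12 r (r23 r (r12 r t)) = r23 r (r12 r (r23 r t)).

Definition weak_distributive_solution (S : Type) (m j : S -> S -> S) : Prop :=
  braid_eq (rW m j).

(* Main.v *)
Require Import Defs.

Lemma A0 (S : Type) (m j : S -> S -> S) (H : is_skew_lattice m j) : forall v0 : S, m v0 v0 = v0.
Proof. destruct H as (h0&h1&h2&h3&h4&h5&h6&h7). exact h0. Qed.
Lemma A1 (S : Type) (m j : S -> S -> S) (H : is_skew_lattice m j) : forall v0 : S, j v0 v0 = v0.
Proof. destruct H as (h0&h1&h2&h3&h4&h5&h6&h7). exact h1. Qed.
Lemma A2 (S : Type) (m j : S -> S -> S) (H : is_skew_lattice m j) : forall v0 v1 v2 : S, m (m v0 v1) v2 = m v0 (m v1 v2).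
Proof. destruct H as (h0&h1&h2&h3&h4&h5&h6&h7). intros; symmetry; apply h2. Qed.
Lemma A3 (S : Type) (m j : S -> S -> S) (H : is_skew_lattice m j) : forall v0 v1 v2 : S, j (j v0 v1) v2 = j v0 (j v1 v2).
Proof. destruct H as (h0&h1&h2&h3&h4&h5&h6&h7). intros; symmetry; apply h3. Qed.
Lemma A4 (S : Type) (m j : S -> S -> S) (H : is_skew_lattice m j) : forall v0 v1 : S, m v0 (j v0 v1) = v0.
Proof. destruct H as (h0&h1&h2&h3&h4&h5&h6&h7). exact h4. Qed.
Lemma A5 (S : Type) (m j : S -> S -> S) (H : is_skew_lattice m j) : forall v0 v1 : S, j v0 (m v0 v1) = v0.
Proof. destruct H as (h0&h1&h2&h3&h4&h5&h6&h7). exact h5. Qed.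
Lemma A6 (S : Type) (m j : S -> S -> S) (H : is_skew_lattice m j) : forall v0 v1 : S, j (m v0 v1) v1 = v1.
Proof. destruct H as (h0&h1&h2&h3&h4&h5&h6&h7). exact h6. Qed.
Lemma A7 (S : Type) (m j : S -> S -> S) (H : is_skew_lattice m j) : forall v0 v1 : S, m (j v0 v1) v1 = v1.
Proof. destruct H as (h0&h1&h2&h3&h4&h5&h6&h7). exact h7. Qed.

Lemma R0 (S : Type) (m j : S -> S -> S) (H : is_skew_lattice m j) : forall v0 : S, (m v0 v0) = v0.
Proof. intros v0.
  pose proof (A0 S m j H v0) as h0.
  congruence. Qed.

Lemma R1 (S : Type) (m j : S -> S -> S) (H : is_skew_lattice m j) : forall v0 : S, (j v0 v0) = v0.
Proof. intros v0.
  pose proof (A1 S m j H v0) as h0.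
  congruence. Qed.

Lemma R2 (S : Type) (m j : S -> S -> S) (H : is_skew_lattice m j) : forall v0 v1 : S, (m v0 (j v0 v1)) = v0.
Proof. intros v0 v1.
  pose proof (A4 S m j H v0 v1) as h0.
  congruence. Qed.

Lemma R3 (S : Type) (m j : S -> S -> S) (H : is_skew_lattice m j) : forall v0 v1 : S, (j v0 (m v0 v1)) = v0.
Proof. intros v0 v1.
  pose proof (A5 S m j H v0 v1) as h0.
  congruence. Qed.

Lemma R4 (S : Type) (m j : S -> S -> S) (H : is_skew_lattice m j) : forall v0 v1 : S, (j (m v0 v1) v1) = v1.
Proof. intros v0 v1.
  pose proof (A6 S m j H v0 v1) as h0.
  congruence. Qed.

Lemma R5 (S : Type) (m j : S -> S -> S) (H : is_skew_lattice m j) : forall v0 v1 : S, (m (j v0 v1) v1) = v1.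
Proof. intros v0 v1.
  pose proof (A7 S m j H v0 v1) as h0.
  congruence. Qed.

Lemma R10 (S : Type) (m j : S -> S -> S) (H : is_skew_lattice m j) : forall v0 v1 v2 : S, (m (m v0 v1) v2) = (m v0 (m v1 v2)).
Proof. intros v0 v1 v2.
  pose proof (A2 S m j H v0 v1 v2) as h0.
  congruence. Qed.

Lemma R11 (S : Type) (m j : S -> S -> S) (H : is_skew_lattice m j) : forall v0 v1 v2 : S, v0 = (j (m v1 (m v2 v0)) v0).
Proof. intros v0 v1 v2.
  pose proof (R4 S m j H (m v1 v2) v0) as h0.
  pose proof (R10 S m j H v1 v2 v0) as h1.
  congruence. Qed.

Lemma R12 (S : Type) (m j : S -> S -> S) (H : is_skew_lattice m j) : forall v0 v1 v2 : S, (j (j v0 v1) v2) = (j v0 (j v1 v2)).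
Proof. intros v0 v1 v2.
  pose proof (A3 S m j H v0 v1 v2) as h0.
  congruence. Qed.

Lemma R13 (S : Type) (m j : S -> S -> S) (H : is_skew_lattice m j) : forall v0 v1 v2 : S, v0 = (m (j v1 (j v2 v0)) v0).
Proof. intros v0 v1 v2.
  pose proof (R5 S m j H (j v1 v2) v0) as h0.
  pose proof (R12 S m j H v1 v2 v0) as h1.
  congruence. Qed.

Lemma R15 (S : Type) (m j : S -> S -> S) (H : is_skew_lattice m j) : forall v0 v1 v2 : S, (m v0 (m (j v0 v1) v2)) = (m v0 v2).
Proof. intros v0 v1 v2.
  pose proof (R10 S m j H v0 (j v0 v1) v2) as h0.
  pose proof (R2 S m j H v0 v1) as h1.
  congruence. Qed.

Lemma R16 (S : Type) (m j : S -> S -> S) (H : is_skew_lattice m j) : forall v0 v1 v2 : S, (m (j v0 v1) (m v1 v2)) = (m v1 v2).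
Proof. intros v0 v1 v2.
  pose proof (R10 S m j H (j v0 v1) v1 v2) as h0.
  pose proof (R5 S m j H v0 v1) as h1.
  congruence. Qed.

Lemma R20 (S : Type) (m j : S -> S -> S) (H : is_skew_lattice m j) : forall v0 v1 v2 : S, (j v0 (j (m v0 v1) v2)) = (j v0 v2).
Proof. intros v0 v1 v2.
  pose proof (R12 S m j H v0 (m v0 v1) v2) as h0.
  pose proof (R3 S m j H v0 v1) as h1.
  congruence. Qed.

Lemma R24 (S : Type) (m j : S -> S -> S) (H : is_skew_lattice m j) : forall v0 v1 v2 : S, (j v0 v1) = (m (j v0 v1) (j v0 (j v1 v2))).
Proof. intros v0 v1 v2.
  pose proof (R2 S m j H (j v0 v1) v2) as h0.
  pose proof (R12 S m j H v0 v1 v2) as h1.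
  congruence. Qed.

Lemma R33 (S : Type) (m j : S -> S -> S) (H : is_skew_lattice m j) : forall v0 v1 v2 : S, (m (j v0 v1) v2) = (j (m v0 v2) (m (j v0 v1) v2)).
Proof. intros v0 v1 v2.
  pose proof (R4 S m j H v0 (m (j v0 v1) v2)) as h0.
  pose proof (R15 S m j H v0 v1 v2) as h1.
  congruence. Qed.

Lemma R34 (S : Type) (m j : S -> S -> S) (H : is_skew_lattice m j) : forall v0 v1 : S, (m (j v0 v1) v0) = (j v0 (m (j v0 v1) v0)).
Proof. intros v0 v1.
  pose proof (R33 S m j H v0 v1 v0) as h0.
  pose proof (R0 S m j H v0) as h1.
  congruence. Qed.

Lemma R35 (S : Type) (m j : S -> S -> S) (H : is_skew_lattice m j) : forall v0 v1 v2 : S, (m v0 v1) = (m v0 (m v1 (m (j v0 v2) v1))).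
Proof. intros v0 v1 v2.
  pose proof (R2 S m j H (m v0 v1) (m (j v0 v2) v1)) as h0.
  pose proof (R33 S m j H v0 v2 v1) as h1.
  pose proof (R10 S m j H v0 v1 (m (j v0 v2) v1)) as h2.
  congruence. Qed.

Lemma R38 (S : Type) (m j : S -> S -> S) (H : is_skew_lattice m j) : forall v0 v1 v2 : S, (j (m v0 v1) v2) = (m (j v0 v2) (j (m v0 v1) v2)).
Proof. intros v0 v1 v2.
  pose proof (R5 S m j H v0 (j (m v0 v1) v2)) as h0.
  pose proof (R20 S m j H v0 v1 v2) as h1.
  congruence. Qed.

Lemma R39 (S : Type) (m j : S -> S -> S) (H : is_skew_lattice m j) : forall v0 v1 : S, (j (m v0 v1) v0) = (m v0 (j (m v0 v1) v0)).
Proof. intros v0 v1.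
  pose proof (R38 S m j H v0 v1 v0) as h0.
  pose proof (R1 S m j H v0) as h1.
  congruence. Qed.

Lemma R49 (S : Type) (m j : S -> S -> S) (H : is_skew_lattice m j) : forall v0 v1 : S, (j v0 (j v1 v0)) = (m (j v0 (j v1 v0)) (j v0 v1)).
Proof. intros v0 v1.
  pose proof (R24 S m j H (j v0 v1) v0 v1) as h0.
  pose proof (R1 S m j H (j v0 v1)) as h1.
  pose proof (R12 S m j H v0 v1 v0) as h2.
  pose proof (R12 S m j H v0 v1 v0) as h3.
  congruence. Qed.

Lemma R50 (S : Type) (m j : S -> S -> S) (H : is_skew_lattice m j) : forall v0 v1 v2 : S, (j v0 (m v1 v2)) = (m (j v0 (m v1 v2)) (j v0 v2)).
Proof. intros v0 v1 v2.
  pose proof (R24 S m j H v0 (m v1 v2) v2) as h0.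
  pose proof (R4 S m j H v1 v2) as h1.
  congruence. Qed.

Lemma R59 (S : Type) (m j : S -> S -> S) (H : is_skew_lattice m j) : forall v0 v1 v2 : S, v0 = (m v0 (m (j v1 (j v0 v2)) v0)).
Proof. intros v0 v1 v2.
  pose proof (R35 S m j H (j v1 v0) v0 v2) as h0.
  pose proof (R16 S m j H v1 v0 (m (j (j v1 v0) v2) v0)) as h1.
  pose proof (R5 S m j H v1 v0) as h2.
  pose proof (R12 S m j H v1 v0 v2) as h3.
  congruence. Qed.

Lemma R78 (S : Type) (m j : S -> S -> S) (H : is_skew_lattice m j) : forall v0 v1 v2 : S, (j v0 v1) = (j (m v2 (j v0 (j v1 v0))) (j v0 v1)).
Proof. intros v0 v1 v2.
  pose proof (R11 S m j H (j v0 v1) v2 (j v0 (j v1 v0))) as h0.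
  pose proof (R49 S m j H v0 v1) as h1.
  congruence. Qed.

Lemma R96 (S : Type) (m j : S -> S -> S) (H : is_skew_lattice m j) : forall v0 v1 v2 : S, (j v0 v1) = (j v0 (j (m v2 (j v1 v0)) (j v0 v1))).
Proof. intros v0 v1 v2.
  pose proof (R78 S m j H v0 v1 (j v0 (m v2 (j v1 v0)))) as h0.
  pose proof (R50 S m j H v0 v2 (j v1 v0)) as h1.
  pose proof (R12 S m j H v0 (m v2 (j v1 v0)) (j v0 v1)) as h2.
  congruence. Qed.

Lemma R125 (S : Type) (m j : S -> S -> S) (H : is_skew_lattice m j) : forall v0 v1 v2 : S, (j v0 (j (m (j v0 v1) v0) v2)) = (j (m (j v0 v1) v0) v2).
Proof. intros v0 v1 v2.
  pose proof (R12 S m j H v0 (m (j v0 v1) v0) v2) as h0.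
  pose proof (R34 S m j H v0 v1) as h1.
  congruence. Qed.

Lemma R128 (S : Type) (m j : S -> S -> S) (H : is_skew_lattice m j) : forall v0 v1 v2 v3 : S, v0 = (m v0 (m (j v1 (j (m (j v0 v2) v0) v3)) v0)).
Proof. intros v0 v1 v2 v3.
  pose proof (R59 S m j H v0 v1 (j (m (j v0 v2) v0) v3)) as h0.
  pose proof (R125 S m j H v0 v2 v3) as h1.
  congruence. Qed.

Lemma R133 (S : Type) (m j : S -> S -> S) (H : is_skew_lattice m j) : forall v0 v1 : S, (j v0 v1) = (m (j v0 v1) (m (j v1 v0) (j v0 v1))).
Proof. intros v0 v1.
  pose proof (R128 S m j H (j v0 v1) v1 v0 (j v1 v0)) as h0.
  pose proof (R96 S m j H v1 v0 (j (j v0 v1) v0)) as h1.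
  congruence. Qed.

Lemma R137 (S : Type) (m j : S -> S -> S) (H : is_skew_lattice m j) : forall v0 v1 : S, (m v0 (m (j v1 v0) (j v0 v1))) = v0.
Proof. intros v0 v1.
  pose proof (R15 S m j H v0 v1 (m (j v1 v0) (j v0 v1))) as h0.
  pose proof (R133 S m j H v0 v1) as h1.
  pose proof (R2 S m j H v0 v1) as h2.
  congruence. Qed.

Lemma R138 (S : Type) (m j : S -> S -> S) (H : is_skew_lattice m j) : forall v0 v1 v2 : S, (m v0 (m (j v1 v0) (m (j v0 v1) v2))) = (m v0 v2).
Proof. intros v0 v1 v2.
  pose proof (R10 S m j H v0 (m (j v1 v0) (j v0 v1)) v2) as h0.
  pose proof (R137 S m j H v0 v1) as h1.
  pose proof (R10 S m j H (j v1 v0) (j v0 v1) v2) as h2.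
  congruence. Qed.

Lemma R140 (S : Type) (m j : S -> S -> S) (H : is_skew_lattice m j) : forall v0 v1 v2 : S, (m v0 v1) = (m v0 (m (j v2 (j v1 v0)) v1)).
Proof. intros v0 v1 v2.
  pose proof (R138 S m j H v0 (j v2 v1) v1) as h0.
  pose proof (R13 S m j H v1 v0 v2) as h1.
  pose proof (R12 S m j H v2 v1 v0) as h2.
  congruence. Qed.

Lemma R147 (S : Type) (m j : S -> S -> S) (H : is_skew_lattice m j) : forall v0 v1 v2 : S, (m v0 (m v1 v0)) = (m v0 (m (j v2 v0) (m v1 v0))).
Proof. intros v0 v1 v2.
  pose proof (R140 S m j H v0 (m v1 v0) v2) as h0.
  pose proof (R4 S m j H v1 v0) as h1.
  congruence. Qed.

Lemma R160 (S : Type) (m j : S -> S -> S) (H : is_skew_lattice m j) : forall v0 v1 v2 : S, (m v0 (m (j (m v0 v1) v0) v2)) = (m (j (m v0 v1) v0) v2).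
Proof. intros v0 v1 v2.
  pose proof (R10 S m j H v0 (j (m v0 v1) v0) v2) as h0.
  pose proof (R39 S m j H v0 v1) as h1.
  congruence. Qed.

Lemma R166 (S : Type) (m j : S -> S -> S) (H : is_skew_lattice m j) : forall v0 v1 v2 : S, (m (j (m v0 v1) v0) (m v2 v0)) = (m v0 (m v2 v0)).
Proof. intros v0 v1 v2.
  pose proof (R160 S m j H v0 v1 (m v2 v0)) as h0.
  pose proof (R147 S m j H v0 v2 (m v0 v1)) as h1.
  congruence. Qed.

Lemma R472 (S : Type) (m j : S -> S -> S) (H : is_skew_lattice m j) : forall v0 v1 v2 : S, (m v0 (m v1 (m v2 v0))) = (m v0 (m v1 (m v0 (m v2 v0)))).
Proof. intros v0 v1 v2.
  pose proof (R15 S m j H (m v0 v1) v0 (m v2 v0)) as h0.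
  pose proof (R166 S m j H v0 v1 v2) as h1.
  pose proof (R10 S m j H v0 v1 (m v2 v0)) as h2.
  pose proof (R10 S m j H v0 v1 (m v0 (m v2 v0))) as h3.
  congruence. Qed.

Lemma Rgoal (S : Type) (m j : S -> S -> S) (H : is_skew_lattice m j) : forall a b c : S, (m a (m b (m a (m c a)))) = (m a (m b (m c a))).
Proof. intros a b c.
  pose proof (R472 S m j H a b c) as h0.
  congruence. Qed.

Lemma swap_sl (S : Type) (m j : S -> S -> S) : is_skew_lattice m j -> is_skew_lattice j m.
Proof. intros (h0&h1&h2&h3&h4&h5&h6&h7). unfold is_skew_lattice; tauto. Qed.

Lemma RJ (S : Type) (m j : S -> S -> S) (H : is_skew_lattice m j) : forall a b c : S,
  j a (j b (j a (j c a))) = j a (j b (j c a)).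
Proof. exact (Rgoal S j m (swap_sl _ _ _ H)). Qed.

Lemma comp1 (S : Type) (m j : S -> S -> S) (H : is_skew_lattice m j) (x y z : S) :
  m (m x (m y x)) (m (m (j x (j y x)) (m z (j x (j y x)))) (m x (m y x)))
  = m x (m (m y (m z y)) x).
Proof.
  destruct H as (h0&h1&h2&h3&h4&h5&h6&h7) eqn:E.
  assert (L1 : m x (j x (j y x)) = x) by apply h4.
  assert (L2 : m (j x (j y x)) x = x) by (rewrite h3; apply h7).
  repeat rewrite <- h2.
  rewrite (h2 x (j x (j y x))), L1. rewrite (h2 (j x (j y x)) x), L2.
  pose proof (Rgoal S m j H x y (m z (m x y))) as R1. repeat rewrite <- h2 in R1. rewrite R1.
  repeat rewrite <- h2.
  pose proof (Rgoal S m j H x (m y z) y) as R2. repeat rewrite <- h2 in R2. rewrite R2.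
  repeat rewrite <- h2. reflexivity.
Qed.

Lemma comp3 (S : Type) (m j : S -> S -> S) (H : is_skew_lattice m j) (x y z : S) :
  j (j x (j y x)) (j z (j x (j y x)))
  = j (j x (j (m y (m z y)) x)) (j (j y (j z y)) (j x (j (m y (m z y)) x))).
Proof.
  destruct H as (h0&h1&h2&h3&h4&h5&h6&h7) eqn:E.
  pose proof (RJ S m j H x y (j z (j x y))) as R1. repeat rewrite <- h3 in R1.
  pose proof (RJ S m j H x (j y z) y) as R2. repeat rewrite <- h3 in R2.
  pose proof (RJ S m j H x (m y (m z y)) (j y (j z (j y (j x (m y (m z y))))))) as R3. repeat rewrite <- h3 in R3.
  pose proof (RJ S m j H x (j (m y (m z y)) (j y (j z y))) (m y (m z y))) as R4. repeat rewrite <- h3 in R4.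
  assert (L1 : j (m y (m z y)) y = y) by (rewrite h2; apply h6).
  assert (L2 : j y (m y (m z y)) = y) by apply h5.
  repeat rewrite <- h3.
  rewrite R1, R2, R3, R4.
  rewrite (h3 (m y (m z y)) y), L1.
  rewrite (h3 y (m y (m z y))), L2.
  reflexivity.
Qed.

Theorem mainTheorem16 (S : Type) (m j : S -> S -> S) :
  is_skew_lattice m j ->
  (weak_distributive_solution m j <->
   forall x y z : S,
     j (j (m x (m y x)) (m (j x (j y x)) (m z (j x (j y x))))) (m x (m y x)) =
     m (m (j x (j (m y (m z y)) x)) (j y (j z y))) (j x (j (m y (m z y)) x))).
Proof.
  intros H. pose proof H as H'.
  destruct H' as (h0&h1&h2&h3&h4&h5&h6&h7).
  unfold weak_distributive_solution, braid_eq, r12, r23, rW. split.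
  - intros B x y z. specialize (B (x, y, z)). simpl in B.
    injection B as B1 B2 B3.
    rewrite <- h3, <- h2. exact B2.
  - intros Hm [[x y] z]. simpl.
    rewrite (comp1 S m j H x y z), (comp3 S m j H x y z).
    specialize (Hm x y z). rewrite <- h3, <- h2 in Hm. rewrite Hm. reflexivity.
Qed.
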